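(* Let $P_{\mathrm{app}}=\sum_{i=0}^na_iX^i\in K[X]$ be monic of degree $n$, and let $0<d<n$ be such that $(d,\mathrm{val}(a_d))$ is an extremal point of $\mathrm{NP}(P_{\mathrm{app}})$, with $a_j\ne0$ for some $j<d$. Let $\varphi_P$ be a Newton function of degree $n-1$ which is nondegenerate for $P_{\mathrm{app}}$, in the following sense: - $\varphi_P\ge\mathrm{NF}(P_{\mathrm{app}})$ on $[0,n-1]$; - $\varphi_P(x)>y$ for every extremal point $(x,y)$ of $\mathrm{NP}(P_{\mathrm{app}})$ with $x\le n-1$. Let $\varphi$ be as defined in the context and set $$\delta=\min_{x\in[0,n-1]}\big(\varphi_P(x)-\varphi(x)\big).$$ Assume $\delta>0$. Let $\delta P\in K_{\le n-1}[X]$ satisfy $\mathrm{val}(c_i)\ge\varphi_P(i)$ for all $0\le i\le n-1$, where $c_i$ is the coefficient of $X^i$ in $\delta P$, and put $P=P_{\mathrm{app}}+\delta P$. Then $\mathrm{NF}(P)=\mathrm{NF}(P_{\mathrm{app}})$. Let $A^{(1)}$ (resp. $A^{(1)}_{\mathrm{app}}$) be the unique monic divisor of $P$ (resp. of $P_{\mathrm{app}}$) of degree $d$ whose Newton function is $\mathrm{NF}(P_{\mathrm{app}})|_{[0,d]}-\mathrm{NF}(P_{\mathrm{app}})(d)$. Then for every $0\le i\le d-1$, the coefficient of $X^i$ in $A^{(1)}-A^{(1)}_{\mathrm{app}}$ has valuation at least $\varphi(i)-\varphi(d)+\delta$.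
   Context: $K$ is a complete discrete valuation field with valuation $\mathrm{val}:K\to\mathbb Z\cup\{+\infty\}$, normalized to be surjective. $K_{\le m}[X]$ denotes the polynomials of degree at most $m$. For $Q=\sum q_iX^i\in K[X]$ nonzero of degree $m$, $\mathrm{NF}(Q):[0,m]\to\mathbb R\cup\{+\infty\}$ is the greatest convex function with $\mathrm{NF}(Q)(i)\le\mathrm{val}(q_i)$ for all $0\le i\le m$. Its epigraph is the Newton polygon $\mathrm{NP}(Q)$, and an extremal point is a vertex of it. A Newton function of degree $m$ is a convex, piecewise affine function $[0,m]\to\mathbb R\cup\{+\infty\}$, finite at $m$, whose epigraph has extremal points with integral abscissae. Set $\lambda_0=\mathrm{NF}(P_{\mathrm{app}})(d)-\mathrm{NF}(P_{\mathrm{app}})(d-1)$. The function $\varphi:[0,+\infty)\to\mathbb R\cup\{+\infty\}$ is defined by $\varphi(x)=\mathrm{NF}(P_{\mathrm{app}})(x)$ for $x\le d$ and $\varphi(x)=\lambda_0(x-d)+\mathrm{NF}(P_{\mathrm{app}})(d)$ for $x>d$. Existence and uniqueness of the monic divisors in the statement: a polynomial whose Newton polygon has an extremal point at abscissa $d$ has a unique monic divisor of degree $d$ whose Newton function is the restriction of its own Newton function to $[0,d]$, shifted by a constant so that its value at $d$ is $0$. *)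

(* Defs.v *)
From HB Require Import structures.
From mathcomp Require Import all_boot all_order all_algebra.
Set Implicit Arguments. Unset Strict Implicit. Unset Printing Implicit Defensive.
Import Order.TTheory GRing.Theory Num.Theory.
Local Open Scope ring_scope.

(* ---------- Valuations: values in Z ∪ {+oo}, encoded as option int (None = +oo) *)

Definition vge (v : option int) (k : int) : bool :=
  if v is Some a then k <= a else true.

Definition oaddi (u v : option int) : option int :=
  match u, v with Some a, Some b => Some (a + b) | _, _ => None end.

Definition is_cdvf (K : fieldType) (val : K -> option int) : Prop :=
  [/\ (forall x, val x = None <-> x = 0),
      (forall x y, val (x * y) = oaddi (val x) (val y)),
      (forall x y k, vge (val x) k -> vge (val y) k -> vge (val (x + y)) k),
      (forall k : int, exists x, val x = Some k) &
      (forall u : nat -> K,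
         (forall M : int, exists N, forall p q, (N <= p)%N -> (N <= q)%N ->
             vge (val (u p - u q)) M) ->
         exists l, forall M : int, exists N, forall p, (N <= p)%N ->
             vge (val (u p - l)) M)].

(* ---------- Extended reals R ∪ {+oo}, encoded as option R (None = +oo) *)

Section Ext.
Variable R : realFieldType.

Definition ole (u v : option R) : bool :=
  match u, v with
  | _, None => true
  | None, Some _ => false
  | Some a, Some b => a <= b
  end.

Definition olt (u v : option R) : bool :=
  match u, v with
  | None, _ => false
  | Some _, None => true
  | Some a, Some b => a < b
  end.

Definition ointR (v : option int) : option R := omap (fun k : int => k%:~R) v.

Definition osub (u : option R) (c : R) : option R := omap (fun a => a - c) u.

Definition epi (m : R) (f : R -> option R) (p : R * R) : Prop :=
  0 <= p.1 <= m /\ ole (f p.1) (Some p.2).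

Definition comb (t : R) (p q : R * R) : R * R :=
  (t * p.1 + (1 - t) * q.1, t * p.2 + (1 - t) * q.2).

Definition convex_on (m : R) (f : R -> option R) : Prop :=
  forall p q t, epi m f p -> epi m f q -> 0 <= t <= 1 -> epi m f (comb t p q).

Definition extremal (m : R) (f : R -> option R) (p : R * R) : Prop :=
  epi m f p /\
  forall q r t, epi m f q -> epi m f r -> 0 < t < 1 -> p = comb t q r -> q = r.

Definition piecewise_affine (m : R) (f : R -> option R) : Prop :=
  exists s : seq R,
    [/\ path <%R 0 s, last 0 s = m &
        forall k, (k < size s)%N ->
          let a := nth 0 (0 :: s) k in let b := nth 0 s k in
          (forall x, a < x < b -> f x = None) \/
          (exists al be : R, forall x, a <= x <= b -> f x = Some (al * x + be))].

Definition newton_function (m : nat) (f : R -> option R) : Prop :=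
  [/\ convex_on m%:R f,
      piecewise_affine m%:R f,
      f m%:R != None &
      forall p, extremal m%:R f p -> exists k : nat, p.1 = k%:R].

Definition is_NF (K : fieldType) (val : K -> option int) (Q : {poly K})
    (f : R -> option R) : Prop :=
  let m := (size Q).-1 in
  [/\ convex_on m%:R f,
      (forall i : nat, (i <= m)%N -> ole (f i%:R) (ointR (val Q`_i))) &
      (forall g : R -> option R, convex_on m%:R g ->
         (forall i : nat, (i <= m)%N -> ole (g i%:R) (ointR (val Q`_i))) ->
         forall x, 0 <= x <= m%:R -> ole (g x) (f x))].

(* the function phi built from NF(P_app) =: fapp and d *)
Definition phi_ext (fapp : R -> option R) (d : nat) (x : R) : option R :=
  if x <= d%:R then fapp x
  else match fapp d%:R, fapp (d.-1)%:R with
       | Some a, Some b => Some ((a - b) * (x - d%:R) + a)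
       | _, _ => None
       end.

End Ext.

(* Main.v *)
Require Import Defs.
From HB Require Import structures.
From mathcomp Require Import all_boot all_order all_algebra.
From mathcomp Require Import ring lra zify.
Set Implicit Arguments. Unset Strict Implicit. Unset Printing Implicit Defensive.
Import Order.TTheory GRing.Theory Num.Theory.
Local Open Scope ring_scope.

Section Val.
Variables (K : fieldType) (val : K -> option int).
Hypothesis Hv : is_cdvf val.

Lemma val_None x : val x = None <-> x = 0.
Proof. by case: Hv. Qed.

Lemma vzero : val 0 = None.
Proof. by apply/val_None. Qed.

Lemma val_mul x y : val (x * y) = oaddi (val x) (val y).
Proof. by case: Hv. Qed.

Lemma val_add x y k : vge (val x) k -> vge (val y) k -> vge (val (x + y)) k.
Proof. by case: Hv => _ _ H _ _; apply: H. Qed.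

Lemma val_Some x : x != 0 -> exists a, val x = Some a.
Proof.
move=> nx; case E: (val x) => [a|]; first by exists a.
by move/val_None: E => E; rewrite E eqxx in nx.
Qed.

Lemma vone : val 1 = Some 0.
Proof.
have [a Ha] := val_Some (oner_neq0 K).
have := val_mul 1 1; rewrite mulr1 Ha /= => -[] H.
by congr Some; lia.
Qed.

Lemma valN1 : val (-1) = Some 0.
Proof.
have [a Ha] : exists a, val (-1) = Some a by apply: val_Some; rewrite oppr_eq0 oner_neq0.
have := val_mul (-1) (-1); rewrite mulrNN mulr1 vone Ha /= => -[] H.
by congr Some; lia.
Qed.

Lemma vneg x : val (- x) = val x.
Proof.
rewrite -mulN1r val_mul valN1; case: (val x) => //= a; by rewrite add0r.
Qed.

End Val.

Section ValR.
Variables (K : fieldType) (val : K -> option int) (R : realFieldType).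
Hypothesis Hv : is_cdvf val.

Definition geR (r : R) (w : option int) := ole (Some r) (ointR R w).
Definition gtR (r : R) (w : option int) := olt (Some r) (ointR R w).

Lemma geR_add r x y : geR r (val x) -> geR r (val y) -> geR r (val (x + y)).
Proof.
case Ex: (val x) => [a|]; last by move/(val_None Hv): Ex => ->; rewrite add0r => _ h.
case Ey: (val y) => [b|]; last by move/(val_None Hv): Ey => ->; rewrite addr0 Ex => h _.
rewrite /geR /= => ha hb.
have := val_add Hv (k := Order.min a b) (x := x) (y := y).
rewrite Ex Ey /= !ge_min !lexx orbT /= => /(_ isT isT).
case: (val (x + y)) => [c|] //= hc.
case: (leP a b) hc => hab hc.
- by apply: le_trans ha _; rewrite ler_int.
- by apply: le_trans hb _; rewrite ler_int.
Qed.

Lemma gtR_add r x y : gtR r (val x) -> gtR r (val y) -> gtR r (val (x + y)).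
Proof.
case Ex: (val x) => [a|]; last by move/(val_None Hv): Ex => ->; rewrite add0r => _ h.
case Ey: (val y) => [b|]; last by move/(val_None Hv): Ey => ->; rewrite addr0 Ex => h _.
rewrite /gtR /= => ha hb.
have := val_add Hv (k := Order.min a b) (x := x) (y := y).
rewrite Ex Ey /= !ge_min !lexx orbT /= => /(_ isT isT).
case: (val (x + y)) => [c|] //= hc.
case: (leP a b) hc => hab hc.
- by apply: lt_le_trans ha _; rewrite ler_int.
- by apply: lt_le_trans hb _; rewrite ler_int.
Qed.

Lemma geR_N r x : geR r (val (- x)) = geR r (val x).
Proof. by rewrite (vneg Hv). Qed.
Lemma gtR_N r x : gtR r (val (- x)) = gtR r (val x).
Proof. by rewrite (vneg Hv). Qed.

Lemma geR_mul r1 r2 x y : geR r1 (val x) -> geR r2 (val y) -> geR (r1 + r2) (val (x * y)).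
Proof.
rewrite (val_mul Hv) /geR; case: (val x) => [a|] //; case: (val y) => [b|] //=.
by move=> ha hb; rewrite intrD lerD.
Qed.

Lemma gtR_mull r1 r2 x y : gtR r1 (val x) -> geR r2 (val y) -> gtR (r1 + r2) (val (x * y)).
Proof.
rewrite (val_mul Hv) /geR /gtR; case: (val x) => [a|] //; case: (val y) => [b|] //=.
by move=> ha hb; rewrite intrD ltr_leD.
Qed.

Lemma gtR_mulr r1 r2 x y : geR r1 (val x) -> gtR r2 (val y) -> gtR (r1 + r2) (val (x * y)).
Proof.
rewrite (val_mul Hv) /geR /gtR; case: (val x) => [a|] //; case: (val y) => [b|] //=.
by move=> ha hb; rewrite intrD ler_ltD.
Qed.

Lemma gtR_geR r x : gtR r (val x) -> geR r (val x).
Proof. by rewrite /gtR /geR; case: (val x) => //= a /ltW. Qed.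

Lemma geR_le r1 r2 w : r1 <= r2 -> geR r2 w -> geR r1 w.
Proof. by rewrite /geR; case: w => //= a h1 h2; apply: le_trans h1 h2. Qed.

Lemma gtR_le r1 r2 w : r1 <= r2 -> gtR r2 w -> gtR r1 w.
Proof. by rewrite /gtR; case: w => //= a h1 h2; apply: le_lt_trans h1 h2. Qed.

Lemma geR_lt r1 r2 w : r1 < r2 -> geR r2 w -> gtR r1 w.
Proof. by rewrite /gtR /geR; case: w => //= a h1 h2; apply: lt_le_trans h1 h2. Qed.

Lemma geR0 r : geR r (val 0).
Proof. by rewrite (vzero Hv). Qed.
Lemma gtR0 r : gtR r (val 0).
Proof. by rewrite (vzero Hv). Qed.

Lemma val_strict r x y : ointR R (val x) = Some r -> gtR r (val y) ->
  ointR R (val (x + y)) = Some r.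
Proof.
move=> Ex hy.
have hx : geR r (val x) by rewrite /geR Ex /=.
have hxy := geR_add hx (gtR_geR hy).
case Exy: (val (x + y)) hxy => [c|] /=; rewrite /geR ?Exy //= => hc.
- case: (eqVneq (c%:~R : R) r) => [->//|ne].
  have gt : gtR r (val (x + y)) by rewrite /gtR Exy /= lt_neqAle eq_sym ne hc.
  have := gtR_add gt (y := - y); rewrite gtR_N => /(_ hy).
  by rewrite addrK /gtR Ex /= ltxx.
- have gt : gtR r (val (x + y)) by rewrite /gtR Exy.
  have := gtR_add gt (y := - y); rewrite gtR_N => /(_ hy).
  by rewrite addrK /gtR Ex /= ltxx.
Qed.

Lemma geR_sum (I : Type) (s : seq I) (P : pred I) (F : I -> K) r :
  (forall i, P i -> geR r (val (F i))) -> geR r (val (\sum_(i <- s | P i) F i)).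
Proof.
move=> h; apply: (big_ind (fun z => geR r (val z))) => //; first exact: geR0.
by move=> a b; apply: geR_add.
Qed.

Lemma gtR_sum (I : Type) (s : seq I) (P : pred I) (F : I -> K) r :
  (forall i, P i -> gtR r (val (F i))) -> gtR r (val (\sum_(i <- s | P i) F i)).
Proof.
move=> h; apply: (big_ind (fun z => gtR r (val z))) => //; first exact: gtR0.
by move=> a b; apply: gtR_add.
Qed.

End ValR.

Section Profile.
Variables (K : fieldType) (val : K -> option int) (R : realFieldType).
Hypothesis Hv : is_cdvf val.

Definition profile (U : {poly K}) (lam mu : R) (t : nat) :=
 [/\ forall k, geR (mu + lam * k%:R) (val U`_k),
     ointR R (val U`_t) = Some (mu + lam * t%:R) &
     forall k, (t < k)%N -> gtR (mu + lam * k%:R) (val U`_k)].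

Lemma real_split (lam mu1 mu2 : R) (i j : nat) : (j <= i)%N ->
  mu1 + lam * j%:R + (mu2 + lam * (i - j)%:R) = mu1 + mu2 + lam * i%:R.
Proof. by move=> h; rewrite natrB //; ring. Qed.

Lemma profile_mul U W lam mu1 mu2 t1 t2 :
  profile U lam mu1 t1 -> profile W lam mu2 t2 ->
  profile (U * W) lam (mu1 + mu2) (t1 + t2).
Proof.
move=> [U1 U2 U3] [W1 W2 W3]; split.
- move=> k; rewrite coefM; apply: (geR_sum Hv) => j _.
  rewrite -(real_split lam mu1 mu2 (ltnSE (ltn_ord j))).
  by apply: (geR_mul Hv).
- rewrite coefM (bigD1 (@Ordinal (t1 + t2).+1 t1 (leq_addr t2 t1 : (t1 < (t1 + t2).+1)%N) : 'I_(t1 + t2).+1)) //=.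
  have -> : (t1 + t2 - t1 = t2)%N by rewrite addKn.
  apply: (val_strict Hv).
    rewrite (val_mul Hv).
    move: U2 W2; rewrite -(real_split lam mu1 mu2 (leq_addr t2 t1)) addKn.
    case: (val U`_t1) => // a; case: (val W`_t2) => // b /= [<-] [<-].
    by rewrite intrD.
  apply: (gtR_sum Hv) => j; rewrite -val_eqE /= => nj.
  rewrite -(real_split lam mu1 mu2 (ltnSE (ltn_ord j))).
  case: (ltngtP j t1) nj => // hj _.
  + apply: (gtR_mulr Hv); first exact: U1.
    apply: W3; have := ltn_ord j; lia.
  + by apply: (gtR_mull Hv); [apply: U3 | apply: W1].
- move=> k hk; rewrite coefM; apply: (gtR_sum Hv) => j _.
  rewrite -(real_split lam mu1 mu2 (ltnSE (ltn_ord j))).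
  case: (ltnP t1 j) => hj.
  + by apply: (gtR_mull Hv); [apply: U3 | apply: W1].
  + apply: (gtR_mulr Hv); first exact: U1.
    apply: W3; have := ltn_ord j; lia.
Qed.

Lemma profile_uniq U lam mu1 mu2 t1 t2 :
  profile U lam mu1 t1 -> profile U lam mu2 t2 -> mu1 = mu2 /\ t1 = t2.
Proof.
move=> [U1 U2 U3] [W1 W2 W3].
have h12 := U1 t2; have h21 := W1 t1.
rewrite /geR W2 /= in h12; rewrite /geR U2 /= in h21.
have e : mu1 = mu2.
  case: (ltngtP t1 t2) => [lt|lt|e].
  - by have := U3 _ lt; rewrite /gtR W2 /=; lra.
  - by have := W3 _ lt; rewrite /gtR U2 /=; lra.
  - by move: W2; rewrite -e U2 => -[]; lra.
split=> //; subst mu2.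
case: (ltngtP t1 t2) => [lt|lt|//].
- by have := U3 _ lt; rewrite /gtR W2 /= ltxx.
- by have := W3 _ lt; rewrite /gtR U2 /= ltxx.
Qed.

End Profile.

Definition vR (R : realFieldType) (w : option int) : R := odflt 0 (ointR R w).

Section ProfileEx.
Variables (K : fieldType) (val : K -> option int) (R : realFieldType).
Hypothesis Hv : is_cdvf val.

Lemma ointR_vR x : x != 0 -> ointR R (val x) = Some (vR R (val x)).
Proof. by move=> /(val_Some Hv) [a ->]. Qed.

Lemma profile_ex (U : {poly K}) (lam : R) : U != 0 -> exists mu t, profile val U lam mu t.
Proof.
move=> U0.
have sz : (0 < size U)%N by rewrite size_poly_gt0.
pose F (k : 'I_(size U)) := vR R (val U`_k) - lam * (k : nat)%:R.
pose P (k : 'I_(size U)) := U`_k != 0.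
pose k0 : 'I_(size U) := @Ordinal (size U) (size U).-1 (eq_ind_r is_true sz (ltn_predL (size U))).
have Pk0 : P k0 by rewrite /P /= -lead_coefE lead_coef_eq0.
case: (arg_minP F Pk0) => i0 Pi0 mini0.
pose mu := F i0.
pose Q (k : 'I_(size U)) := P k && (F k == mu).
have Qi0 : Q i0 by rewrite /Q Pi0 eqxx.
case: (arg_maxnP (fun k : 'I_(size U) => (k : nat)) Qi0) => t /andP[Pt /eqP Ft] maxt.
exists mu, t; split.
- move=> k; case: (ltnP k (size U)) => hk; last by rewrite nth_default // geR0.
  case: (eqVneq U`_k 0) => [->|nz]; first by rewrite geR0.
  have := mini0 (Ordinal hk) nz; rewrite /geR ointR_vR //= /mu /F /=; lra.
- by rewrite ointR_vR //; congr Some; move: Ft; rewrite /mu /F /=; lra.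
- move=> k tk; case: (ltnP k (size U)) => hk; last by rewrite nth_default // gtR0.
  case: (eqVneq U`_k 0) => [->|nz]; first by rewrite gtR0.
  have := mini0 (Ordinal hk) nz; rewrite /gtR ointR_vR //= /F /= => h.
  case: (eqVneq (F (Ordinal hk)) mu) => e.
    by have := maxt (Ordinal hk); rewrite /Q /P /= nz e eqxx /= => /(_ isT); rewrite leqNgt tk.
  have hlt : F i0 < F (Ordinal hk) by rewrite lt_neqAle eq_sym e h.
  move: hlt; rewrite /mu /F /=; lra.
Qed.

End ProfileEx.

Section Conv.
Variable R : realFieldType.
Implicit Types (f g : R -> option R) (m : R).

Lemma ole_None (u : option R) : ole u None.
Proof. by case: u. Qed.

Lemma conv_pt m f x z y fx fy : convex_on m f -> 0 <= x -> x <= z -> z <= y -> y <= m ->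
  x < y -> f x = Some fx -> f y = Some fy ->
  exists fz, f z = Some fz /\ (y - x) * fz <= (y - z) * fx + (z - x) * fy.
Proof.
move=> cf h0 hxz hzy hym hxy Fx Fy.
have yx0 : 0 < y - x by rewrite subr_gt0.
pose t := (y - z) / (y - x).
have ht : t * x + (1 - t) * y = z.
  by rewrite /t; field; rewrite lt0r_neq0.
have t0 : 0 <= t <= 1.
  apply/andP; split; first by apply: divr_ge0; lra.
  by rewrite /t ler_pdivrMr // mul1r; lra.
have := cf (x, fx) (y, fy) t.
rewrite /epi /comb /= Fx Fy /= !lexx ht.
have -> : (0 <= x <= m) by apply/andP; split=> //; lra.
have -> : (0 <= y <= m) by apply/andP; split=> //; lra.
move=> /(_ (conj isT isT) (conj isT isT) t0) [_].
case Fz: (f z) => [fz|] //= hz; exists fz; split=> //.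
have e1 : (y - x) * t = y - z by rewrite /t mulrC divfK ?lt0r_neq0.
have e2 : (y - x) * (1 - t) = z - x by rewrite mulrBr mulr1 e1; ring.
have h := ler_wpM2l (ltW yx0) hz.
have ee : (y - x) * (t * fx + (1 - t) * fy) = (y - z) * fx + (z - x) * fy.
  by rewrite mulrDr mulrA e1 mulrA e2.
by rewrite -ee.
Qed.

Lemma affine_convex m s c : convex_on m (fun x => Some (c + s * x)).
Proof.
move=> [p1 p2] [q1 q2] t [/= hp1 hp2] [/= hq1 hq2] /andP[t0 t1]; split.
  rewrite /comb /=; move: hp1 hq1 => /andP[? ?] /andP[? ?].
  apply/andP; split; nra.
rewrite /comb /=; move: hp2 hq2 => /= hp hq; nra.
Qed.

Lemma extremal_val m f x y : extremal m f (x, y) -> f x = Some y.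
Proof.
move=> [[/= hx hy] ext].
case Fx: (f x) hy => [z|] //= hz.
case: (eqVneq z y) => [->//|ne].
have lt : z < y by rewrite lt_neqAle ne hz.
have := ext (x, z) (x, 2 * y - z) (1/2).
rewrite /epi /comb /= Fx /= hx lexx.
have -> : z <= 2 * y - z by lra.
have -> : ((0 : R) < 1 / 2) && ((1 / 2 : R) < 1) by apply/andP; split; lra.
have -> : ((1/2 : R) * x + (1 - 1/2) * x, 1/2 * z + (1 - 1/2) * (2 * y - z)) = (x, y).
  by congr pair; field.
move=> /(_ (conj isT isT) (conj isT isT) isT erefl) [] e.
have ezy : z = y by lra.
by rewrite ezy eqxx in ne.
Qed.

End Conv.

Section Hull.
Variable R : realFieldType.
Variables (m : nat) (v : nat -> option R).

Definition vr k : R := odflt 0 (v k).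

Lemma vS k : v k != None -> v k = Some (vr k).
Proof. by rewrite /vr; case: (v k). Qed.

Lemma support_line x : 0 <= x ->
  (exists k1 k2, [/\ (k1 <= m)%N, (k2 <= m)%N, v k1 != None, v k2 != None &
                    (k1%:R : R) <= x <= k2%:R]) ->
  exists s c, (forall k, (k <= m)%N -> ole (Some (c + s * k%:R)) (v k)) /\
   exists i j, [/\ (i <= m)%N, (j <= m)%N, (i%:R : R) <= x <= j%:R,
     v i = Some (c + s * i%:R) & v j = Some (c + s * j%:R)] /\
     ((i < j)%N \/ forall k, (k <= m)%N -> v k != None -> k = i).
Proof.
move=> x0 [k1 [k2 [hk1 hk2 nk1 nk2 /andP[xk1 xk2]]]].
have exS : exists k, (k <= m)%N && (v k != None) by exists k2; rewrite hk2.
have ubS : forall k, (k <= m)%N && (v k != None) -> (k <= m)%N by move=> k /andP[].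
case: (ex_maxnP exS ubS) => hi /andP[hhi nhi] maxhi.
have k2hi : (k2 <= hi)%N by apply: maxhi; rewrite hk2 nk2.
have k1hi : (k1 <= hi)%N by apply: maxhi; rewrite hk1 nk1.
case: (ltP x hi%:R) => [xlt|xge].
-
  pose T := ('I_m.+1 * 'I_m.+1)%type.
  pose cand (p : T) := [&& v p.1 != None, v p.2 != None,
                           (p.1 : nat)%:R <= x & x < (p.2 : nat)%:R].
  pose key1 (p : T) := (((p.2 : nat)%:R - x) * vr p.1 + (x - (p.1 : nat)%:R) * vr p.2)
                       / ((p.2 : nat)%:R - (p.1 : nat)%:R).
  pose key2 (p : T) := (vr p.2 - vr p.1) / ((p.2 : nat)%:R - (p.1 : nat)%:R).
  pose p0 : T := (inord k1, inord hi).
  have cp0 : cand p0 by rewrite /cand /= !inordK ?ltnS // nk1 nhi xk1 xlt.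
  case: (arg_minP key1 cp0) => pm cpm min1.
  pose mu := key1 pm.
  pose cand2 (p : T) := cand p && (key1 p == mu).
  have cpm2 : cand2 pm by rewrite /cand2 cpm eqxx.
  case: (arg_minP key2 cpm2) => pp /andP[cpp /eqP kpp] min2.
  move: cpp; rewrite /cand; case: pp kpp min2 => [[i hi'] [j hj']] /= kpp min2.
  move=> /and4P[ni nj ix xj].
  have Dp : 0 < j%:R - i%:R :> R by rewrite subr_gt0; apply: le_lt_trans ix xj.
  have Dn : j%:R - i%:R != 0 :> R by rewrite lt0r_neq0.
  set s := key2 (Ordinal hi', Ordinal hj').
  have es : s = (vr j - vr i) / (j%:R - i%:R) by [].
  pose c := vr i - s * i%:R.
  have evj : vr j = c + s * j%:R by rewrite /c es; field.
  have emu : mu = c + s * x by rewrite -kpp /key1 /= /c es; field.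
  exists s, c; split; last first.
    exists i, j; split; [split|]; rewrite ?ltnS //.
    + by rewrite ix ltW.
    + by rewrite vS // /c; congr Some; ring.
    + by rewrite vS // evj.
    + by left; rewrite -(ltr_nat R); apply: le_lt_trans ix xj.
  move=> k km; case: (eqVneq (v k) None) => [->//|nk]; rewrite vS //=.
  rewrite leNgt; apply/negP => lt.
  case: (lerP k%:R x) => kx.
  + have ckj : cand (inord k, Ordinal hj') by rewrite /cand /= inordK ?ltnS // nk nj kx xj.
    have := min1 _ ckj; rewrite -/mu emu /key1 /= inordK ?ltnS //.
    have Dk : 0 < j%:R - k%:R :> R by rewrite subr_gt0; apply: le_lt_trans kx xj.
    rewrite ler_pdivlMr // evj.
    have jx : 0 < j%:R - x by rewrite subr_gt0.
    have h := lt; rewrite -(ltr_pM2l jx) in h; nra.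
  + have cik : cand (Ordinal hi', inord k) by rewrite /cand /= inordK ?ltnS // ni nk ix kx.
    have Dk : 0 < k%:R - i%:R :> R by rewrite subr_gt0; apply: le_lt_trans ix kx.
    have h1 := min1 _ cik; move: (h1); rewrite -/mu emu /key1 /= inordK ?ltnS //.
    rewrite ler_pdivlMr // => h2.
    have evi : vr i = c + s * i%:R by rewrite /c; ring.
    have exi : x = i%:R.
      apply: le_anti; rewrite ix andbT; rewrite evi in h2.
      rewrite leNgt; apply/negP => ltx.
      have : 0 < x - i%:R by rewrite subr_gt0.
      move=> p; have h := lt; rewrite -(ltr_pM2l p) in h; nra.
    have c2 : cand2 (Ordinal hi', inord k).
      rewrite /cand2 cik /=; apply/eqP; apply: le_anti; rewrite h1 andbT.
      rewrite -/mu emu /key1 /= inordK ?ltnS // ler_pdivrMr // exi evi; nra.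
    have := min2 _ c2; rewrite /key2 /= inordK ?ltnS // -/s ler_pdivlMr // evi.
    nra.
-
  have exh : x = hi%:R.
    by apply: le_anti; rewrite xge andbT; apply: le_trans xk2 _; rewrite ler_nat.
  case: (boolP [exists i : 'I_hi, v i != None]) => [/existsP[i0 ni0]|none].
  + pose key3 (i : 'I_hi) := (vr hi - vr i) / (hi%:R - (i : nat)%:R).
    case: (arg_maxP key3 (P := fun i : 'I_hi => v i != None) ni0) => im nim max3.
    have Dp : 0 < hi%:R - (im : nat)%:R :> R by rewrite subr_gt0 ltr_nat.
    set s := key3 im.
    pose c := vr hi - s * hi%:R.
    have evi : vr im = c + s * (im : nat)%:R by rewrite /c /s /key3; field; rewrite lt0r_neq0.
    exists s, c; split; last first.
      exists im, hi; split; [split|] => //.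
      * by apply: leq_trans hhi; apply: ltnW.
      * by rewrite exh lexx andbT ler_nat ltnW.
      * by rewrite vS // evi.
      * by rewrite vS // /c; congr Some; ring.
      * by left.
    move=> k km; case: (eqVneq (v k) None) => [->//|nk]; rewrite vS //=.
    have khi : (k <= hi)%N by apply: maxhi; rewrite km nk.
    case: (ltnP k hi) => [kh|hk].
      have Dk : 0 < hi%:R - k%:R :> R by rewrite subr_gt0 ltr_nat.
      have := max3 (Ordinal kh) nk; rewrite -/s /key3 /= ler_pdivrMr // /c; nra.
    have -> : k = hi by apply/eqP; rewrite eqn_leq khi hk.
    by rewrite /c; lra.
  + exists 0, (vr hi); split.
      move=> k km; case: (eqVneq (v k) None) => [->//|nk]; rewrite vS //=.
      have khi : (k <= hi)%N by apply: maxhi; rewrite km nk.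
      case: (ltnP k hi) => [kh|hk].
        by move/existsP: none; case; exists (Ordinal kh).
      have -> : k = hi by apply/eqP; rewrite eqn_leq khi hk.
      by rewrite mul0r addr0.
    exists hi, hi; split; [split|] => //.
    * by rewrite exh lexx.
    * by rewrite vS // mul0r addr0.
    * by rewrite vS // mul0r addr0.
    * right=> k km nk; have khi : (k <= hi)%N by apply: maxhi; rewrite km nk.
      case: (ltnP k hi) => [kh|hk].
        by move/existsP: none; case; exists (Ordinal kh).
      by apply/eqP; rewrite eqn_leq khi hk.
Qed.

End Hull.

Section NFv.
Variable R : realFieldType.

Definition isNFv (m : nat) (v : nat -> option R) (f : R -> option R) : Prop :=
  [/\ convex_on m%:R f,
      (forall i : nat, (i <= m)%N -> ole (f i%:R) (v i)) &
      (forall g : R -> option R, convex_on m%:R g ->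
         (forall i : nat, (i <= m)%N -> ole (g i%:R) (v i)) ->
         forall x, 0 <= x <= m%:R -> ole (g x) (f x))].

Lemma lb_ex (w : nat -> R) m : exists d0, forall k, (k <= m)%N -> d0 <= w k.
Proof.
elim: m => [|m [d IH]]; first by exists (w 0%N) => k; rewrite leqn0 => /eqP ->.
exists (Num.min d (w m.+1)) => k; rewrite leq_eqVlt => /orP[/eqP ->|].
  by rewrite ge_min lexx orbT.
by rewrite ltnS => /IH h; rewrite ge_min h.
Qed.

Variables (m : nat) (v : nat -> option R) (f : R -> option R).
Hypothesis Hf : isNFv m v f.

Lemma line_le s c : (forall k, (k <= m)%N -> ole (Some (c + s * k%:R)) (v k)) ->
  forall x, 0 <= x <= m%:R -> ole (Some (c + s * x)) (f x).
Proof. by case: Hf => _ _ H hs; apply: H => //; apply: affine_convex. Qed.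

Lemma NF_range x y : 0 <= x <= m%:R -> f x = Some y ->
  exists k1 k2, [/\ (k1 <= m)%N, (k2 <= m)%N, v k1 != None, v k2 != None &
                    (k1%:R : R) <= x <= k2%:R].
Proof.
move=> hx Fx.
have contra s c : (forall k, (k <= m)%N -> v k != None -> c + s * k%:R <= vr v k) ->
    c + s * x <= y.
  move=> h; suff : ole (Some (c + s * x)) (f x) by rewrite Fx.
  apply: line_le => // k km.
  by case: (eqVneq (v k) None) => [->//|nk]; rewrite (vS nk) /=; apply: h.
have [d0 Hd0] := lb_ex (vr v) m.
case: (boolP [exists k : 'I_m.+1, v k != None]) => [/existsP[k0 nk0]|none]; last first.
  have h := contra 0 (y + 1); rewrite mul0r addr0 in h.
  suff : y + 1 <= y by lra.
  by apply: h => k km nk; move/existsP: none; case; exists (Ordinal (km : (k < m.+1)%N)).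
have exS : exists k, (k <= m)%N && (v k != None).
  by exists k0; rewrite nk0 -ltnS ltn_ord.
have ubS : forall k, (k <= m)%N && (v k != None) -> (k <= m)%N by move=> k /andP[].
case: (ex_minnP exS) => lo /andP[lom nlo] minlo.
case: (ex_maxnP exS ubS) => hi /andP[him nhi] maxhi.
exists lo, hi; split=> //.
apply/andP; split.
  rewrite leNgt; apply/negP => xlo.
  pose M := (`|y - d0| + 1) / (lo%:R - x).
  have Dp : 0 < lo%:R - x by rewrite subr_gt0.
  have M0 : 0 <= M by rewrite /M divr_ge0 // ?ltW //; apply: ltr_wpDl.
  have eM : M * (lo%:R - x) = `|y - d0| + 1 by rewrite /M divfK // lt0r_neq0.
  have h0 := contra (- M) (d0 + M * lo%:R).
  have nrm := ler_norm (y - d0).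
  suff : d0 + M * lo%:R + - M * x <= y by nra.
  apply: h0 => k km nk; have := Hd0 k km; have : (lo <= k)%N by apply: minlo; rewrite km nk.
  rewrite -(ler_nat R) => lok h; nra.
rewrite leNgt; apply/negP => xhi.
pose M := (`|y - d0| + 1) / (x - hi%:R).
have Dp : 0 < x - hi%:R by rewrite subr_gt0.
have M0 : 0 <= M by rewrite /M divr_ge0 // ?ltW //; apply: ltr_wpDl.
have eM : M * (x - hi%:R) = `|y - d0| + 1 by rewrite /M divfK // lt0r_neq0.
have h0 := contra M (d0 - M * hi%:R).
have nrm := ler_norm (y - d0).
suff : d0 - M * hi%:R + M * x <= y by nra.
apply: h0 => k km nk; have := Hd0 k km; have : (k <= hi)%N by apply: maxhi; rewrite km nk.
rewrite -(ler_nat R) => lok h; nra.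
Qed.

Lemma NF_some x k1 k2 : (k1 <= m)%N -> (k2 <= m)%N -> v k1 != None -> v k2 != None ->
  (k1%:R : R) <= x <= k2%:R -> exists y, f x = Some y.
Proof.
move=> h1 h2 n1 n2 /andP[x1 x2].
case: Hf => cf Hle _.
have := Hle k1 h1; rewrite (vS n1); case F1: (f k1%:R) => [f1|] //= _.
have := Hle k2 h2; rewrite (vS n2); case F2: (f k2%:R) => [f2|] //= _.
case: (ltP (k1%:R : R) k2%:R) => lt.
  have k2m : (k2%:R : R) <= m%:R by rewrite ler_nat.
  have [fz [Fz _]] := conv_pt cf (ler0n _ _) x1 x2 k2m lt F1 F2.
  by exists fz.
have ex : x = k1%:R by apply: le_anti; rewrite x1 andbT; apply: le_trans x2 lt.
by exists f1; rewrite ex.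
Qed.

Lemma NF_line x y : 0 <= x <= m%:R -> f x = Some y ->
  exists s c, (forall k, (k <= m)%N -> ole (Some (c + s * k%:R)) (v k)) /\ y = c + s * x /\
   exists i j, [/\ (i <= m)%N, (j <= m)%N, (i%:R : R) <= x <= j%:R,
     v i = Some (c + s * i%:R) & v j = Some (c + s * j%:R)].
Proof.
move=> hx Fx.
have [k1 [k2 H]] := NF_range hx Fx.
have x0 : 0 <= x by case/andP: hx.
have [s [c [hs [i [j [[im jm hij vi vj] dis]]]]]] := support_line x0 (ex_intro _ k1 (ex_intro _ k2 H)).
exists s, c; split=> //; split; last by exists i, j; split.
have := line_le hs hx; rewrite Fx /= => le1.
apply: le_anti; rewrite le1 andbT.
case: Hf => cf Hle _.
have := Hle i im; rewrite vi; case Fi: (f i%:R) => [fi|] //= hfi.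
have := Hle j jm; rewrite vj; case Fj: (f j%:R) => [fj|] //= hfj.
case/andP: hij => ix xj.
case: dis => [ltij|single].
  have ltr : (i%:R : R) < j%:R by rewrite ltr_nat.
  have jm' : (j%:R : R) <= m%:R by rewrite ler_nat.
  have [fz [Fz hz]] := conv_pt cf (ler0n _ _) ix xj jm' ltr Fi Fj.
  move: Fz; rewrite Fx => -[efz]; rewrite efz.
  have Dp : 0 < (j%:R : R) - i%:R by rewrite subr_gt0.
  rewrite -(ler_pM2l Dp); apply: le_trans hz _.
  have : 0 <= j%:R - x by rewrite subr_ge0.
  have : 0 <= x - i%:R by rewrite subr_ge0.
  nra.
have ji : j = i by apply: single => //; rewrite vj.
have ex : x = i%:R by apply: le_anti; rewrite ix andbT; rewrite ji in xj.
by move: Fi; rewrite -ex Fx => -[efi]; rewrite efi ex.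
Qed.

End NFv.

Section NFv2.
Variable R : realFieldType.
Variables (m : nat) (v : nat -> option R) (f : R -> option R).
Hypothesis Hf : isNFv m v f.

Lemma online_pts s c z : (forall k, (k <= m)%N -> ole (Some (c + s * k%:R)) (v k)) ->
  0 <= z <= m%:R -> f z = Some (c + s * z) ->
  (exists k, [/\ (k <= m)%N, k%:R <= z & v k = Some (c + s * k%:R)]) /\
  (exists k, [/\ (k <= m)%N, z <= k%:R & v k = Some (c + s * k%:R)]).
Proof.
move=> hs hz Fz.
have [s2 [c2 [hs2 [e2 [i [j [im jm /andP[iz zj] vi vj]]]]]]] := NF_line Hf hz Fz.
have := hs i im; rewrite vi /= => li.
have := hs j jm; rewrite vj /= => lj.
case: (eqVneq z i%:R) => [ezi|nzi].
  have onl : v i = Some (c + s * i%:R) by rewrite vi -ezi -e2.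
  by split; exists i; split=> //; rewrite ezi.
case: (eqVneq z j%:R) => [ezj|nzj].
  have onl : v j = Some (c + s * j%:R) by rewrite vj -ezj -e2.
  by split; exists j; split=> //; rewrite ezj.
have iz' : i%:R < z by rewrite lt_neqAle eq_sym nzi iz.
have zj' : z < j%:R by rewrite lt_neqAle nzj zj.
set A := c2 + s2 * i%:R - (c + s * i%:R).
set B := c2 + s2 * j%:R - (c + s * j%:R).
have A0 : 0 <= A by rewrite subr_ge0.
have B0 : 0 <= B by rewrite subr_ge0.
have eq0 : (j%:R - z) * A + (z - i%:R) * B = 0.
  rewrite /A /B; have : c2 + s2 * z = c + s * z by [].
  move=> e; nra.
have p1 : 0 <= (j%:R - z) * A by apply: mulr_ge0 => //; rewrite subr_ge0.
have p2 : 0 <= (z - i%:R) * B by apply: mulr_ge0 => //; rewrite subr_ge0.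
have eA : (j%:R - z) * A = 0 by lra.
have eB : (z - i%:R) * B = 0 by lra.
move/eqP: eA; rewrite mulf_eq0 subr_eq0 eq_sym (negbTE nzj) /= subr_eq0 => /eqP eA.
move/eqP: eB; rewrite mulf_eq0 subr_eq0 (negbTE nzi) /= subr_eq0 => /eqP eB.
split.
  by exists i; split=> //; rewrite vi eA.
by exists j; split=> //; rewrite vj eB.
Qed.

Lemma extremal_side s c i : (forall k, (k <= m)%N -> ole (Some (c + s * k%:R)) (v k)) ->
  (i <= m)%N -> v i = Some (c + s * i%:R) ->
  ((forall k, (k < i)%N -> v k != Some (c + s * k%:R)) \/
   (forall k, (i < k)%N -> (k <= m)%N -> v k != Some (c + s * k%:R))) ->
  extremal m%:R f (i%:R, c + s * i%:R).
Proof.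
move=> hs im vi side.
case: (Hf) => cf Hle _.
have im' : (i%:R : R) <= m%:R by rewrite ler_nat.
split.
  split; first by rewrite /= ler0n im'.
  by rewrite /= -vi; apply: Hle.
move=> [q1 q2] [r1 r2] t [/= hq1 hq2] [/= hr1 hr2] /andP[t0 t1] [e1 e2].
have lq : c + s * q1 <= q2.
  have := line_le Hf hs hq1; case: (f q1) hq2 => //= a h1 h2; apply: le_trans h2 h1.
have lr : c + s * r1 <= r2.
  have := line_le Hf hs hr1; case: (f r1) hr2 => //= a h1 h2; apply: le_trans h2 h1.
have eq0 : t * (q2 - (c + s * q1)) + (1 - t) * (r2 - (c + s * r1)) = 0.
  rewrite e1 in e2; nra.
have p1 : 0 <= t * (q2 - (c + s * q1)) by apply: mulr_ge0; lra.
have p2 : 0 <= (1 - t) * (r2 - (c + s * r1)) by apply: mulr_ge0; lra.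
have eq1 : t * (q2 - (c + s * q1)) = 0 by lra.
have eq2 : (1 - t) * (r2 - (c + s * r1)) = 0 by lra.
move/eqP: eq1; rewrite mulf_eq0 gt_eqF //= subr_eq0 => /eqP eq1.
move/eqP: eq2; rewrite mulf_eq0 subr_eq0 (gt_eqF t1) /= subr_eq0 => /eqP eq2.
case: (eqVneq q1 r1) => [eqr|neq]; first by rewrite eq1 eq2 eqr.
exfalso.
have Fq : f q1 = Some (c + s * q1).
  have := line_le Hf hs hq1; case: (f q1) hq2 => //= a h1 h2.
  by congr Some; apply: le_anti; rewrite h2 -eq1 h1.
have Fr : f r1 = Some (c + s * r1).
  have := line_le Hf hs hr1; case: (f r1) hr2 => //= a h1 h2.
  by congr Some; apply: le_anti; rewrite h2 -eq2 h1.
have keyL : (forall k, (k < i)%N -> v k != Some (c + s * k%:R)) ->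
    forall z, 0 <= z <= m%:R -> z < i%:R -> f z = Some (c + s * z) -> False.
  move=> L z hz zi Fz.
  have [[k [km kz vk]] _] := online_pts hs hz Fz.
  have ki : (k < i)%N by rewrite -(ltr_nat R); apply: le_lt_trans kz zi.
  by move: (L k ki); rewrite vk eqxx.
have keyR : (forall k, (i < k)%N -> (k <= m)%N -> v k != Some (c + s * k%:R)) ->
    forall z, 0 <= z <= m%:R -> i%:R < z -> f z = Some (c + s * z) -> False.
  move=> Rr z hz zi Fz.
  have [_ [k [km kz vk]]] := online_pts hs hz Fz.
  have ki : (i < k)%N by rewrite -(ltr_nat R); apply: lt_le_trans zi kz.
  by move: (Rr k ki km); rewrite vk eqxx.
have ti : i%:R = t * q1 + (1 - t) * r1 by [].
case: (ltP q1 r1) => qr; last first.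
  have rq : r1 < q1 by rewrite lt_neqAle eq_sym neq qr.
  case: side => [L|Rr].
    by apply: (keyL L r1 hr1 _ Fr); rewrite ti; nra.
  by apply: (keyR Rr q1 hq1 _ Fq); rewrite ti; nra.
case: side => [L|Rr].
  by apply: (keyL L q1 hq1 _ Fq); rewrite ti; nra.
by apply: (keyR Rr r1 hr1 _ Fr); rewrite ti; nra.
Qed.

Lemma L_dom g : convex_on m%:R g ->
  (forall k y, (k <= m)%N -> v k = Some y -> extremal m%:R f (k%:R, y) -> ole (g k%:R) (Some y)) ->
  (forall x, 0 <= x <= m%:R -> f x = None -> g x = None) ->
  forall x, 0 <= x <= m%:R -> ole (g x) (f x).
Proof.
move=> cg Hext Hnone x hx.
case Fx: (f x) => [y|]; last by rewrite (Hnone x hx Fx).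
have [s [c [hs [ey [i [j [im jm /andP[ix xj] vi vj]]]]]]] := NF_line Hf hx Fx.
pose P k := (k <= m)%N && (v k == Some (c + s * k%:R)).
have exP : exists k, P k by exists i; rewrite /P im vi eqxx.
have ubP : forall k, P k -> (k <= m)%N by move=> k /andP[].
case: (ex_minnP exP) => i' /andP[i'm /eqP vi'] mini.
case: (ex_maxnP exP ubP) => j' /andP[j'm /eqP vj'] maxj.
have ii : (i' <= i)%N by apply: mini; rewrite /P im vi eqxx.
have jj : (j <= j')%N by apply: maxj; rewrite /P jm vj eqxx.
have exi : extremal m%:R f (i'%:R, c + s * i'%:R).
  apply: extremal_side => //; left=> k ki; apply/negP => /eqP vk.
  have : (i' <= k)%N by apply: mini; rewrite /P vk eqxx andbT; apply: leq_trans (ltnW ki) i'm.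
  by rewrite leqNgt ki.
have exj : extremal m%:R f (j'%:R, c + s * j'%:R).
  apply: extremal_side => //; right=> k kj km; apply/negP => /eqP vk.
  have : (k <= j')%N by apply: maxj; rewrite /P vk eqxx km.
  by rewrite leqNgt kj.
have gi := Hext _ _ i'm vi' exi.
have gj := Hext _ _ j'm vj' exj.
have xi' : i'%:R <= x by apply: le_trans ix; rewrite ler_nat.
have xj' : x <= j'%:R by apply: le_trans xj _; rewrite ler_nat.
case Gi: (g i'%:R) gi => [gi|] //= hgi.
case Gj: (g j'%:R) gj => [gj|] //= hgj.
case: (ltnP i' j') => lij.
  have ltr : (i'%:R : R) < j'%:R by rewrite ltr_nat.
  have j'm' : (j'%:R : R) <= m%:R by rewrite ler_nat.
  have [gz [Gz hz]] := conv_pt cg (ler0n _ _) xi' xj' j'm' ltr Gi Gj.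
  rewrite Gz /= ey.
  have Dp : 0 < (j'%:R : R) - i'%:R by rewrite subr_gt0.
  rewrite -(ler_pM2l Dp); apply: le_trans hz _.
  have : 0 <= j'%:R - x by rewrite subr_ge0.
  have : 0 <= x - i'%:R by rewrite subr_ge0.
  nra.
have ex : x = i'%:R.
  apply: le_anti; rewrite xi' andbT; apply: le_trans xj' _; by rewrite ler_nat.
by rewrite ex Gi /= ey ex.
Qed.

End NFv2.

Section NFex.
Variable R : realFieldType.
Variables (m : nat) (v : nat -> option R).

Lemma NF_exists : (exists k, (k <= m)%N /\ v k != None) -> exists f, isNFv m v f.
Proof.
move=> [k0 [k0m nk0]].
have exS : exists k, (k <= m)%N && (v k != None) by exists k0; rewrite k0m.
have ubS : forall k, (k <= m)%N && (v k != None) -> (k <= m)%N by move=> k /andP[].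
case: (ex_minnP exS) => lo /andP[lom nlo] minlo.
case: (ex_maxnP exS ubS) => hi /andP[him nhi] maxhi.
pose d0 := \big[Order.min/vr v hi]_(k < m.+1 | v k != None) vr v k.
pose T := ('I_m.+1 * 'I_m.+1)%type.
pose sl (p : T) := (vr v p.2 - vr v p.1) / ((p.2 : nat)%:R - (p.1 : nat)%:R).
pose cc (p : T) := vr v p.1 - sl p * (p.1 : nat)%:R.
pose good (p : T) := [&& v p.1 != None, v p.2 != None, (p.1 < p.2)%N &
    [forall k : 'I_m.+1, (v k != None) ==> (cc p + sl p * (k : nat)%:R <= vr v k)]].
pose L (p : T) (x : R) := if good p then cc p + sl p * x else d0.
pose M x := \big[Order.max/d0]_(p : T) L p x.
pose F x := if (lo%:R <= x) && (x <= hi%:R) then Some (M x) else None.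
have LA p t a b : L p (t * a + (1 - t) * b) = t * L p a + (1 - t) * L p b.
  by rewrite /L; case: (good p); ring.
have Mge x : d0 <= M x by apply: bigmax_ge_id.
have Lle p x : L p x <= M x by apply: le_bigmax.
exists F; split.
- move=> [p1 p2] [q1 q2] t [/= hp1 hp2] [/= hq1 hq2] /andP[t0 t1].
  rewrite /F in hp2 hq2.
  case: ifP hp2 => // /andP[lp hp] /= hp2.
  case: ifP hq2 => // /andP[lq hq] /= hq2.
  split; rewrite /comb /=.
    move: hp1 hq1 => /andP[? ?] /andP[? ?]; apply/andP; split; nra.
  rewrite /F.
  have -> : (lo%:R <= t * p1 + (1 - t) * q1) && (t * p1 + (1 - t) * q1 <= hi%:R).
    apply/andP; split; nra.
  rewrite /=; apply: le_trans (_ : t * M p1 + (1 - t) * M q1 <= _); last by nra.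
  apply: bigmax_le => [|p _].
    have := Mge p1; have := Mge q1; nra.
  rewrite LA; have := Lle p p1; have := Lle p q1; nra.
- move=> i im; case: (eqVneq (v i) None) => [->|ni]; first exact: ole_None.
  have loi : (lo <= i)%N by apply: minlo; rewrite im ni.
  have ihi : (i <= hi)%N by apply: maxhi; rewrite im ni.
  rewrite /F !ler_nat loi ihi /= (vS ni) /=.
  have im' : (i < m.+1)%N by [].
  apply: bigmax_le => [|p _].
    have := @bigmin_le_cond _ _ _ (vr v hi) (inord i) (fun k : 'I_m.+1 => v k != None) (fun k : 'I_m.+1 => vr v k).
    by rewrite inordK //; apply.
  rewrite /L; case: ifP => gp.
    case/and4P: gp => _ _ _ /forallP /(_ (inord i)); rewrite inordK // ni /=.
    by [].
  have := @bigmin_le_cond _ _ _ (vr v hi) (inord i) (fun k : 'I_m.+1 => v k != None) (fun k : 'I_m.+1 => vr v k).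
  by rewrite inordK //; apply.
- move=> g cg Hg x /andP[x0 xm].
  rewrite /F; case: ifP => [/andP[lx xh]|_]; last exact: ole_None.
  have [s [c [hs [i [j [[im jm /andP[ix xj] vi vj] dis]]]]]] :=
    support_line x0 (ex_intro _ lo (ex_intro _ hi (And5 lom him nlo nhi (introT andP (conj lx xh))))).
  have := Hg i im; rewrite vi; case Gi: (g i%:R) => [gi|] //= hgi.
  have := Hg j jm; rewrite vj; case Gj: (g j%:R) => [gj|] //= hgj.
  case: dis => [lij|single].
    have ltr : (i%:R : R) < j%:R by rewrite ltr_nat.
    have jm' : (j%:R : R) <= m%:R by rewrite ler_nat.
    have [gz [Gz hz]] := conv_pt cg (ler0n _ _) ix xj jm' ltr Gi Gj.
    rewrite Gz /=.
    pose p : T := (inord i, inord j).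
    have Dp : 0 < (j%:R : R) - i%:R by rewrite subr_gt0.
    have ni : v i != None by rewrite vi.
    have nj : v j != None by rewrite vj.
    have vi' : vr v i = c + s * i%:R by move: vi; rewrite (vS ni) => -[].
    have vj' : vr v j = c + s * j%:R by move: vj; rewrite (vS nj) => -[].
    have esl : sl p = s.
      rewrite /sl /= !inordK ?ltnS // vi' vj'; field; by rewrite lt0r_neq0.
    have ecc : cc p = c.
      by rewrite /cc esl /= inordK ?ltnS // vi'; ring.
    have gp : good p.
      rewrite /good /= !inordK ?ltnS // ni nj lij /=.
      apply/forallP => k; apply/implyP => nk.
      by rewrite esl ecc; have := hs k (ltn_ord k); rewrite (vS nk).
    apply: le_trans (Lle p x); rewrite /L gp esl ecc.
    rewrite -(ler_pM2l Dp); apply: le_trans hz _.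
    have : 0 <= j%:R - x by rewrite subr_ge0.
    have : 0 <= x - i%:R by rewrite subr_ge0.
    nra.
  have ehi : hi = i by apply: single.
  have elo : lo = i by apply: single.
  have ex : x = i%:R.
    by apply: le_anti; rewrite -{1}ehi xh -elo lx.
  move: Gi; rewrite -ex => ->; apply: le_trans hgi _; apply: le_trans (Mge x).
  apply: le_bigmin; first by rewrite ehi /vr vi.
  by move=> k nk; rewrite (single k (ltn_ord k) nk) /vr vi.
Qed.

End NFex.

Section Conv2.
Variable R : realFieldType.
Implicit Types (f g : R -> option R) (m : R).

Lemma ole_anti (u w : option R) : ole u w -> ole w u -> u = w.
Proof. by case: u => [a|]; case: w => [b|] //= h1 h2; congr Some; apply: le_anti; rewrite h1 h2. Qed.

Lemma conv_some m f a x b ya yb : convex_on m f -> 0 <= a -> a <= x -> x <= b -> b <= m ->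
  f a = Some ya -> f b = Some yb -> exists y, f x = Some y.
Proof.
move=> cf a0 ax xb bm Fa Fb.
case: (ltP a b) => ab.
  by have [fz [Fz _]] := conv_pt cf a0 ax xb bm ab Fa Fb; exists fz.
have ex : x = a by apply: le_anti; rewrite ax andbT; apply: le_trans xb ab.
by exists ya; rewrite ex.
Qed.

Lemma seg_support m f a ya yb z fz : convex_on m f -> 0 <= a -> a + 1 <= m ->
  f a = Some ya -> f (a + 1) = Some yb -> 0 <= z <= m -> (z <= a \/ a + 1 <= z) ->
  f z = Some fz -> ya + (yb - ya) * (z - a) <= fz.
Proof.
move=> cf a0 am Fa Fb /andP[z0 zm] side Fz.
case: side => hz.
  case: (eqVneq z a) => [eza|nza].
    by move: Fz; rewrite eza Fa => -[<-]; rewrite subrr mulr0 addr0.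
  have lt : z < a by rewrite lt_neqAle nza hz.
  have a1 : a <= a + 1 by lra.
  have lt2 : z < a + 1 by lra.
  have [fa [Fa' h]] := conv_pt cf z0 hz a1 am lt2 Fz Fb.
  move: Fa'; rewrite Fa => -[efa]; rewrite -efa in h.
  nra.
case: (eqVneq z (a + 1)) => [eza|nza].
  move: Fz; rewrite eza Fb => -[<-]; have -> : a + 1 - a = 1 by ring.
  by rewrite mulr1; lra.
have lt : a + 1 < z by rewrite lt_neqAle eq_sym nza hz.
have a1 : a <= a + 1 by lra.
have lt2 : a < z by lra.
have [fa [Fa' h]] := conv_pt cf a0 a1 hz zm lt2 Fa Fz.
move: Fa'; rewrite Fb => -[efa]; rewrite -efa in h.
nra.
Qed.

End Conv2.

Section Main.
Variables (K : fieldType) (val : K -> option int) (R : realFieldType)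
  (n d : nat) (Papp dP A Aapp : {poly K})
  (fapp phiP : R -> option R) (delta : R).
Hypothesis Hv : is_cdvf val.
Hypothesis Hmon : Papp \is monic.
Hypothesis Hsz : size Papp = n.+1.
Hypothesis Hd0 : (0 < d)%N.
Hypothesis Hdn : (d < n)%N.
Hypothesis HNF : is_NF val Papp fapp.
Hypothesis Hext : exists v : int, val Papp`_d = Some v /\ extremal n%:R fapp (d%:R, v%:~R).
Hypothesis Hj : exists j : nat, (j < d)%N /\ Papp`_j != 0.
Hypothesis Hge : forall x, 0 <= x <= n.-1%:R -> ole (fapp x) (phiP x).
Hypothesis Hnd : forall p, extremal n%:R fapp p -> p.1 <= n.-1%:R -> olt (Some p.2) (phiP p.1).
Hypothesis Hdel : forall x b, 0 <= x <= n.-1%:R -> phi_ext fapp d x = Some b ->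
     ole (Some (b + delta)) (phiP x).
Hypothesis Hdpos : 0 < delta.
Hypothesis HdPsz : (size dP <= n)%N.
Hypothesis HdPv : forall i : nat, (i <= n.-1)%N -> ole (phiP i%:R) (@ointR R (val dP`_i)).

Definition vP (i : nat) := ointR R (val Papp`_i).
Definition vPP (i : nat) := ointR R (val (Papp + dP)`_i).

Lemma HfP : isNFv n vP fapp.
Proof. by move: HNF; rewrite /is_NF Hsz. Qed.

Lemma sizePP : size (Papp + dP) = n.+1.
Proof. by rewrite size_addl Hsz // ltnS. Qed.

Lemma n0 : (0 < n)%N.
Proof. by apply: leq_ltn_trans Hdn. Qed.

Lemma lt_n1 k : (k <= n.-1)%N = (k < n)%N.
Proof. by have := n0; case: n. Qed.

Lemma dP_hi k : (n <= k)%N -> dP`_k = 0.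
Proof. by move=> h; rewrite nth_default //; apply: leq_trans HdPsz h. Qed.

Lemma rng k : (k < n)%N -> 0 <= (k%:R : R) <= n.-1%:R.
Proof. by move=> h; rewrite ler0n ler_nat lt_n1. Qed.

Lemma ointR_None (w : option int) : ointR R w = None -> w = None.
Proof. by case: w. Qed.

Lemma fapp_none k : (k <= n)%N -> fapp k%:R = None -> Papp`_k = 0 /\ dP`_k = 0.
Proof.
move=> kn Fk; case: HfP => _ Hle _.
have := Hle k kn; rewrite Fk /vP; case E: (ointR R (val Papp`_k)) => //= _.
split; first by apply/(val_None Hv)/ointR_None.
case: (ltnP k n) => kn'; last by apply: dP_hi.
have := Hge (rng kn'); rewrite Fk; case Ep: (phiP k%:R) => //= _.
have := HdPv (i := k); rewrite lt_n1 => /(_ kn'); rewrite Ep.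
by case Ed: (ointR R (val dP`_k)) => //= _; apply/(val_None Hv)/ointR_None.
Qed.

Lemma fapp_some k y : (k <= n)%N -> fapp k%:R = Some y ->
  geR y (val Papp`_k) /\ geR y (val dP`_k).
Proof.
move=> kn Fk; case: HfP => _ Hle _.
have := Hle k kn; rewrite Fk /vP => h; split; first exact: h.
case: (ltnP k n) => kn'; last by rewrite dP_hi // (geR0 Hv).
have h1 := Hge (rng kn'); rewrite Fk in h1.
have := HdPv (i := k); rewrite lt_n1 => /(_ kn') h2.
move: h1 h2; rewrite /geR; case: (phiP k%:R) => [p|] /=;
  case: (ointR R (val dP`_k)) => //= a; apply: le_trans.
Qed.

Lemma vPP_some k : (k <= n)%N -> vPP k != None -> exists y, fapp k%:R = Some y.
Proof.
move=> kn nk; case Fk: (fapp k%:R) => [y|]; first by exists y.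
have [e1 e2] := fapp_none kn Fk.
by move: nk; rewrite /vPP coefD e1 e2 addr0 (vzero Hv).
Qed.

Lemma part1 fP : is_NF val (Papp + dP) fP -> forall x, 0 <= x <= n%:R -> fP x = fapp x.
Proof.
move=> HP x hx.
have HfPP : isNFv n vPP fP by move: HP; rewrite /is_NF sizePP.
case: (HfPP) => cP leP grP; case: HfP => ca lea gra.
apply: ole_anti.
- apply: (L_dom HfP cP) => //.
  + move=> k y kn vk ext.
    suff e : vPP k = Some y by have := leP k kn; rewrite e.
    rewrite /vPP coefD.
    case: (ltnP k n) => kn'; last first.
      have -> : dP`_k = 0 by apply: dP_hi.
      by rewrite addr0.
    apply: (val_strict Hv) => //.
    have := Hnd ext; rewrite /= => /(_ _); case/andP: (rng kn') => _ h; move/(_ h).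
    have := HdPv (i := k); rewrite lt_n1 => /(_ kn').
    rewrite /gtR; case: (phiP k%:R) => [p|] //=; case: (ointR R (val dP`_k)) => //= a.
    by move=> h1 h2; apply: lt_le_trans h2 h1.
  + move=> z hz Fz; case FPz: (fP z) => [w|] //; exfalso.
    have [k1 [k2 [k1n k2n n1 n2 /andP[z1 z2]]]] := NF_range HfPP hz FPz.
    have [y1 F1] := vPP_some k1n n1.
    have [y2 F2] := vPP_some k2n n2.
    have k2m : (k2%:R : R) <= n%:R by rewrite ler_nat.
    have [y Fy] := conv_some ca (ler0n _ _) z1 z2 k2m F1 F2.
    by rewrite Fy in Fz.
- apply: grP => // i im.
  case Fi: (fapp i%:R) => [y|].
    have [h1 h2] := fapp_some im Fi.
    by rewrite /vPP coefD; apply: (geR_add Hv).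
  have [e1 e2] := fapp_none im Fi.
  by rewrite /vPP coefD e1 e2 addr0 (vzero Hv).
Qed.

Lemma Fd_ex : exists Fd : R, [/\ fapp d%:R = Some Fd, ointR R (val Papp`_d) = Some Fd &
   extremal n%:R fapp (d%:R, Fd)].
Proof.
case: Hext => v0 [e ext]; exists v0%:~R; split=> //; first exact: extremal_val ext.
by rewrite e.
Qed.

Lemma NFX_facts (X : {poly K}) Fd : fapp d%:R = Some Fd ->
  X \is monic -> size X = d.+1 ->
  (forall fA, is_NF val X fA -> forall x, 0 <= x <= d%:R -> fA x = osub (fapp x) (odflt 0 (fapp d%:R))) ->
  exists fX, isNFv d (fun i => ointR R (val X`_i)) fX /\
    forall x, 0 <= x <= d%:R -> fX x = osub (fapp x) Fd.
Proof.
move=> Fdd mon sz HX.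
have [fX HfX] : exists fX, isNFv d (fun i => ointR R (val X`_i)) fX.
  apply: NF_exists; exists d; split=> //.
  have : X`_d = 1 by move/monicP: mon; rewrite lead_coefE sz.
  by move=> ->; rewrite (vone Hv).
exists fX; split=> // x hx.
by rewrite (HX fX _ x hx) ?Fdd //; rewrite /is_NF sz.
Qed.

Lemma fconv : convex_on n%:R fapp.
Proof. by case: HfP. Qed.

Lemma dm1 : (d.-1%:R : R) + 1 = d%:R.
Proof. by rewrite natr1 prednK. Qed.

Lemma sup_gen a ya yb k z : (a < n)%N -> fapp a%:R = Some ya -> fapp a.+1%:R = Some yb ->
  (k <= n)%N -> fapp k%:R = Some z -> ya + (yb - ya) * (k%:R - a%:R) <= z.
Proof.
move=> an Fa Fb kn Fk.
apply: (seg_support fconv (ler0n _ _) _ Fa _ _ _ Fk).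
- by rewrite natr1 ler_nat.
- by rewrite natr1.
- by rewrite ler0n ler_nat.
- by case: (leqP k a) => h; [left; rewrite ler_nat | right; rewrite natr1 ler_nat].
Qed.

Lemma sup0 Fd y0 k z : fapp d%:R = Some Fd -> fapp d.-1%:R = Some y0 ->
  (k <= n)%N -> fapp k%:R = Some z -> Fd + (Fd - y0) * (k%:R - d%:R) <= z.
Proof.
move=> Fdd F0 kn Fk.
have an : (d.-1 < n)%N by apply: leq_ltn_trans Hdn; apply: leq_pred.
have Fb : fapp d.-1.+1%:R = Some Fd by rewrite prednK.
have := sup_gen an F0 Fb kn Fk.
have e : (d.-1%:R : R) = d%:R - 1 by rewrite -dm1; ring.
rewrite e; nra.
Qed.

Lemma strict0 Fd y0 k z : fapp d%:R = Some Fd -> fapp d.-1%:R = Some y0 ->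
  extremal n%:R fapp (d%:R, Fd) ->
  (d < k)%N -> (k <= n)%N -> fapp k%:R = Some z -> Fd + (Fd - y0) * (k%:R - d%:R) < z.
Proof.
move=> Fdd F0 ext dk kn Fk.
rewrite lt_neqAle (sup0 Fdd F0 kn Fk) andbT; apply/negP => /eqP ez.
case: ext => _ ext.
have kd : (d%:R : R) < k%:R by rewrite ltr_nat.
pose t := (k%:R - d%:R) / (k%:R - d%:R + 1) : R.
have D : 0 < (k%:R : R) - d%:R + 1 by lra.
have t0 : 0 < t < 1.
  apply/andP; split; first by rewrite /t divr_gt0 // subr_gt0.
  by rewrite /t ltr_pdivrMr // mul1r; lra.
have e : (d.-1%:R : R) = d%:R - 1 by rewrite -dm1; ring.
have := ext (d.-1%:R, y0) (k%:R, z) t.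
have ep1 : epi n%:R fapp (d.-1%:R, y0).
  split; last by rewrite /= F0 /=.
  by rewrite /= ler0n ler_nat; apply: leq_trans (leq_pred _) (ltnW Hdn).
have ep2 : epi n%:R fapp (k%:R, z).
  by split; [rewrite /= ler0n ler_nat | rewrite /= Fk /=].
have ec : (d%:R, Fd) = comb t (d.-1%:R, y0) (k%:R, z).
  rewrite /comb /= e -ez /t; congr pair; field; by rewrite lt0r_neq0.
move=> /(_ ep1 ep2 t0 ec) [] /eqP; rewrite e => h.
have : (d%:R - 1 : R) < k%:R by lra.
by rewrite (eqP h) ltxx.
Qed.

Lemma profP Fd y0 : fapp d%:R = Some Fd -> ointR R (val Papp`_d) = Some Fd ->
  extremal n%:R fapp (d%:R, Fd) -> fapp d.-1%:R = Some y0 ->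
  profile val (Papp + dP) (Fd - y0) (Fd - (Fd - y0) * d%:R) d.
Proof.
move=> Fdd vPd ext F0; split.
- move=> k; case: (ltnP n k) => kn.
    by rewrite nth_default ?(geR0 Hv) // sizePP.
  case Fk: (fapp k%:R) => [z|].
    have [h1 h2] := fapp_some kn Fk.
    rewrite coefD; apply: (geR_le _ (geR_add Hv h1 h2)).
    have := sup0 Fdd F0 kn Fk; nra.
  by have [e1 e2] := fapp_none kn Fk; rewrite coefD e1 e2 addr0 (geR0 Hv).
- have -> : Fd - (Fd - y0) * d%:R + (Fd - y0) * d%:R = Fd by ring.
  rewrite coefD; apply: (val_strict Hv) => //.
  have dn1 : (d%:R : R) <= n.-1%:R by rewrite ler_nat lt_n1.
  have := Hnd ext dn1; rewrite /=.
  have := HdPv (i := d); rewrite lt_n1 => /(_ Hdn).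
  rewrite /gtR; case: (phiP d%:R) => [p|] //=; case: (ointR R (val dP`_d)) => //= a.
  by move=> h1 h2; apply: lt_le_trans h2 h1.
- move=> k dk; case: (ltnP n k) => kn.
    by rewrite nth_default ?(gtR0 Hv) // sizePP.
  case Fk: (fapp k%:R) => [z|].
    have [h1 h2] := fapp_some kn Fk.
    rewrite coefD; apply: (geR_lt _ (geR_add Hv h1 h2)).
    have := strict0 Fdd F0 ext dk kn Fk; nra.
  by have [e1 e2] := fapp_none kn Fk; rewrite coefD e1 e2 addr0 (gtR0 Hv).
Qed.

Lemma X_lower (X : {poly K}) Fd : fapp d%:R = Some Fd ->
  X \is monic -> size X = d.+1 ->
  (forall fA, is_NF val X fA -> forall x, 0 <= x <= d%:R -> fA x = osub (fapp x) (odflt 0 (fapp d%:R))) ->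
  forall k, (k <= d)%N -> ole (osub (fapp k%:R) Fd) (ointR R (val X`_k)).
Proof.
move=> Fdd mon sz HX k kd.
have [fX [[_ Hle _] eX]] := NFX_facts Fdd mon sz HX.
by rewrite -eX ?Hle // ler0n ler_nat.
Qed.

Lemma X_top (X : {poly K}) : X \is monic -> size X = d.+1 -> X`_d = 1.
Proof. by move/monicP; rewrite lead_coefE => h sz; rewrite sz in h. Qed.

Lemma X_hi (X : {poly K}) k : size X = d.+1 -> (d < k)%N -> X`_k = 0.
Proof. by move=> sz h; rewrite nth_default // sz. Qed.

Lemma profX0 (X : {poly K}) Fd y0 : fapp d%:R = Some Fd -> fapp d.-1%:R = Some y0 ->
  X \is monic -> size X = d.+1 ->
  (forall fA, is_NF val X fA -> forall x, 0 <= x <= d%:R -> fA x = osub (fapp x) (odflt 0 (fapp d%:R))) ->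
  profile val X (Fd - y0) (- ((Fd - y0) * d%:R)) d.
Proof.
move=> Fdd F0 mon sz HX; split.
- move=> k; case: (leqP k d) => kd; last by rewrite X_hi // (geR0 Hv).
  have := X_lower Fdd mon sz HX kd.
  case Fk: (fapp k%:R) => [z|] /=; last by rewrite /geR; case: (ointR R (val X`_k)).
  rewrite /geR; case: (ointR R (val X`_k)) => //= a h; apply: le_trans h.
  have kn : (k <= n)%N by apply: leq_trans kd (ltnW Hdn).
  have := sup0 Fdd F0 kn Fk; nra.
- by rewrite X_top // (vone Hv) /=; congr Some; ring.
- by move=> k dk; rewrite X_hi // (gtR0 Hv).
Qed.

Hypothesis HAm : A \is monic.
Hypothesis HAs : size A = d.+1.
Hypothesis HAd : A %| Papp + dP.
Hypothesis HAN : forall fA : R -> option R, is_NF val A fA ->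
     forall x, 0 <= x <= d%:R -> fA x = osub (fapp x) (odflt 0 (fapp d%:R)).
Hypothesis HBm : Aapp \is monic.
Hypothesis HBs : size Aapp = d.+1.
Hypothesis HBd : Aapp %| Papp.
Hypothesis HBN : forall fA : R -> option R, is_NF val Aapp fA ->
     forall x, 0 <= x <= d%:R -> fA x = osub (fapp x) (odflt 0 (fapp d%:R)).

Lemma PBA : Papp + dP = ((Papp + dP) %/ A) * A.
Proof. by apply/eqP; rewrite -dvdp_eq. Qed.

Lemma profB Fd y0 lam : fapp d%:R = Some Fd -> ointR R (val Papp`_d) = Some Fd ->
  extremal n%:R fapp (d%:R, Fd) -> fapp d.-1%:R = Some y0 -> lam <= Fd - y0 ->
  profile val ((Papp + dP) %/ A) lam Fd 0.
Proof.
move=> Fdd vPd ext F0 lamle.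
set B := (Papp + dP) %/ A.
have B0 : B != 0.
  apply/negP => /eqP B0; have := sizePP; rewrite PBA -/B B0 mul0r size_poly0.
  by [].
have [muB [tB pB]] := profile_ex Hv (Fd - y0) B0.
have pA := profX0 Fdd F0 HAm HAs HAN.
have pAB := profile_mul Hv pA pB.
rewrite mulrC -/B -PBA in pAB.
have [e1 e2] := profile_uniq pAB (profP Fdd vPd ext F0).
have tB0 : tB = 0%N by lia.
have muBe : muB = Fd by lra.
rewrite tB0 muBe in pB; case: pB => [p1 p2 p3]; split.
- move=> k; apply: geR_le (p1 k); have : (0 : R) <= k%:R by []; nra.
- by rewrite p2 !mulr0.
- move=> k kp; apply: gtR_le (p3 k kp); have : (0 : R) <= k%:R by []; nra.
Qed.

Lemma no_eq (r : R) (w : option int) : ointR R w = Some r -> gtR r w -> False.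
Proof. by rewrite /gtR => ->; rewrite /= ltxx. Qed.

Lemma gtR_mono (r1 r2 : R) (w : option int) : r1 <= r2 -> gtR r2 w -> gtR r1 w.
Proof. exact: gtR_le. Qed.

Lemma part2 i : (i < d)%N ->
  ole (osub (phi_ext fapp d i%:R) (odflt 0 (phi_ext fapp d d%:R) - delta))
      (ointR R (val (A - Aapp)`_i)).
Proof.
move=> id.
have [Fd [Fdd vPd ext]] := Fd_ex.
have phik k : (k <= d)%N -> phi_ext fapp d k%:R = fapp k%:R.
  by move=> kd; rewrite /phi_ext ler_nat kd.
rewrite (phik i (ltnW id)) (phik d (leqnn d)) Fdd; change (odflt 0 (Some Fd)) with Fd.
set E := A - Aapp.
have FA := X_lower Fdd HAm HAs HAN.
have FB := X_lower Fdd HBm HBs HBN.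
have Ehi k : (d <= k)%N -> E`_k = 0.
  move=> dk; rewrite /E coefB; case: (ltngtP k d) dk => // [dk|->] _.
    by rewrite !X_hi // subrr.
  by rewrite !X_top // subrr.
have Ezero k : (k <= d)%N -> fapp k%:R = None -> E`_k = 0.
  move=> kd Fk; have := FA k kd; have := FB k kd; rewrite Fk /=.
  case eA: (ointR R (val A`_k)) => //; case eB: (ointR R (val Aapp`_k)) => // _ _.
  move/ointR_None/(val_None Hv): eA => eA; move/ointR_None/(val_None Hv): eB => eB.
  by rewrite /E coefB eA eB subrr.
case Fi: (fapp i%:R) => [y|]; last by rewrite Ezero ?(ltnW id) // (vzero Hv).
change (geR (y - (Fd - delta)) (val E`_i)).
apply/negPn/negP => viol.
have Ei0 : E`_i != 0 by apply: contra viol => /eqP ->; rewrite (geR0 Hv).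
pose g (k : 'I_d) := vR R (val E`_k) - (odflt 0 (fapp (k : nat)%:R) - Fd).
pose Q (k : 'I_d) := E`_k != 0.
have Qi : Q (Ordinal id) by [].
case: (arg_minP g Qi) => im Qim minm.
pose m0 := g im.
pose Q2 (k : 'I_d) := Q k && (g k == m0).
have Q2im : Q2 im by rewrite /Q2 Qim eqxx.
case: (arg_maxnP (fun k : 'I_d => (k : nat)) Q2im) => ist /andP[Qist /eqP gist] maxs.
have istd : (ist < d)%N := ltn_ord ist.
set s := (ist : nat) in istd.
have sn : (s < n)%N by apply: ltn_trans Hdn.
have Efin k : (k < d)%N -> E`_k != 0 ->
    exists z a, [/\ fapp k%:R = Some z, ointR R (val E`_k) = Some a &
                   m0 <= a - (z - Fd)].
  move=> kd nz; case Fk: (fapp k%:R) => [z|]; last by rewrite Ezero ?eqxx ?(ltnW kd) in nz.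
  exists z, (vR R (val E`_k)); split => //; first by rewrite (ointR_vR R Hv).
  by have := minm (Ordinal kd) nz; rewrite /g /= Fk.
have m0d : m0 < delta.
  have [z [a [Fz Ea le]]] := Efin i id Ei0.
  move: Fz; rewrite Fi => -[ez].
  move: viol; rewrite /geR Ea /= -ltNge => viol; lra.
have [ys [as_ [Fs Es les]]] := Efin s istd Qist.
have gs : as_ - (ys - Fd) = m0.
  by move: gist; rewrite /g Fs -/s; move: Es; rewrite (ointR_vR R Hv Qist) => -[->].
have sd : (s.+1 <= d)%N := istd.
have [y1 F1] : exists y1, fapp s.+1%:R = Some y1.
  apply: (conv_some fconv (ler0n _ s) _ _ _ Fs Fdd).
  - by rewrite ler_nat.
  - by rewrite ler_nat.
  - by rewrite ler_nat ltnW.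
set lam := y1 - ys.
have supS k z : (k <= n)%N -> fapp k%:R = Some z -> ys + lam * (k%:R - s%:R) <= z.
  by move=> kn Fk; apply: (sup_gen sn Fs F1 kn Fk).
have [y0 F0] : exists y0, fapp d.-1%:R = Some y0.
  apply: (conv_some fconv (ler0n _ s) _ _ _ Fs Fdd).
  - by rewrite ler_nat -ltnS prednK.
  - by rewrite ler_nat leq_pred.
  - by rewrite ler_nat ltnW.
set lam0 := Fd - y0.
have lamle : lam <= lam0.
  case: (ltngtP s.+1 d) => [lt|gt|eq].
  - have h1 := supS d.-1 y0 (leq_trans (leq_pred _) (ltnW Hdn)) F0.
    have h2 := sup0 Fdd F0 (ltnW sn) Fs.
    have e : (d.-1%:R : R) = d%:R - 1 by rewrite -dm1; ring.
    rewrite e in h1.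
    have D : (s%:R : R) + 1 < d%:R by rewrite natr1 ltr_nat.
    rewrite /lam0; nra.
  - by move: gt; rewrite ltnNge sd.
  - have e1 : d.-1 = s by rewrite -eq.
    move: F0; rewrite e1 Fs => -[e0]; move: F1; rewrite eq Fdd => -[e2].
    rewrite /lam /lam0; lra.
set muE := ys - Fd + m0 - lam * s%:R.
have pE : profile val E lam muE s.
  split.
  - move=> k; case: (eqVneq E`_k 0) => [->|nz]; first by rewrite (geR0 Hv).
    have kd : (k < d)%N by rewrite ltnNge; apply: contra nz => /Ehi ->.
    have [z [a [Fz Ea le]]] := Efin k kd nz.
    have := supS k z (leq_trans (ltnW kd) (ltnW Hdn)) Fz.
    rewrite /geR Ea /= /muE; lra.
  - rewrite Es; congr Some; rewrite /muE; lra.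
  - move=> k sk; case: (eqVneq E`_k 0) => [->|nz]; first by rewrite (gtR0 Hv).
    have kd : (k < d)%N by rewrite ltnNge; apply: contra nz => /Ehi ->.
    have [z [a [Fz Ea le]]] := Efin k kd nz.
    have gk : g (Ordinal kd) = a - (z - Fd).
      by rewrite /g /= Fz; move: Ea; rewrite (ointR_vR R Hv nz) => -[->].
    have ne : a - (z - Fd) != m0.
      apply/negP => /eqP e; have := maxs (Ordinal kd); rewrite /Q2 /Q nz gk e eqxx /=.
      by move=> /(_ isT); rewrite leqNgt sk.
    have lt : m0 < a - (z - Fd) by rewrite lt_neqAle eq_sym ne le.
    have := supS k z (leq_trans (ltnW kd) (ltnW Hdn)) Fz.
    rewrite /gtR Ea /= /muE; lra.
set B := (Papp + dP) %/ A.
have pB : profile val B lam Fd 0 := profB Fdd vPd ext F0 lamle.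
have pEB := profile_mul Hv pE pB.
rewrite addn0 in pEB.
set muEB := muE + Fd in pEB.
have [fB [HfB eB]] := NFX_facts Fdd HBm HBs HBN.
set mus := ys - Fd - lam * s%:R.
have lowB k : geR (mus + lam * k%:R) (val Aapp`_k).
  case: (leqP k d) => kd; last by rewrite X_hi // (geR0 Hv).
  have := FB k kd; case Fk: (fapp k%:R) => [z|] /=; last by rewrite /geR; case: (ointR R (val Aapp`_k)).
  rewrite /geR; case: (ointR R (val Aapp`_k)) => //= a h; apply: le_trans h.
  have := supS k z (leq_trans kd (ltnW Hdn)) Fk; rewrite /mus; lra.
have ez : mus + lam * s.+1%:R = y1 - Fd by rewrite /mus /lam -natr1; ring.
have [k0 [s0k ek0]] : exists k0, (s < k0)%N /\
    ointR R (val Aapp`_k0) = Some (mus + lam * k0%:R).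
  have hz : 0 <= (s.+1%:R : R) <= d%:R by rewrite ler0n ler_nat.
  have FBz : fB s.+1%:R = Some (y1 - Fd) by rewrite eB // F1.
  have [s2 [c2 [hs2 [e2 [p [q [pd qd /andP[pz zq] vp vq]]]]]]] := NF_line HfB hz FBz.
  case: (eqVneq (q%:R : R) s.+1%:R) => [eq|nq].
    have eqn : q = s.+1 by apply/eqP; rewrite -(eqr_nat R) eq.
    by exists q; split; [rewrite eqn | rewrite vq eq -e2 -ez].
  case: (eqVneq (p%:R : R) s.+1%:R) => [ep|np].
    have eqn : p = s.+1 by apply/eqP; rewrite -(eqr_nat R) ep.
    by exists p; split; [rewrite eqn | rewrite vp ep -e2 -ez].
  have pz' : (p%:R : R) < s.+1%:R by rewrite lt_neqAle np pz.
  have zq' : (s.+1%:R : R) < q%:R by rewrite lt_neqAle eq_sym nq zq.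
  have lp := lowB p; rewrite /geR vp /= in lp.
  have lq := lowB q; rewrite /geR vq /= in lq.
  have eqq : c2 + s2 * q%:R = mus + lam * q%:R.
    set z := (s.+1%:R : R) in pz' zq' e2 ez.
    set Ap := c2 + s2 * p%:R - (mus + lam * p%:R).
    set Aq := c2 + s2 * q%:R - (mus + lam * q%:R).
    have Ap0 : 0 <= Ap by rewrite subr_ge0.
    have Aq0 : 0 <= Aq by rewrite subr_ge0.
    have id0 : (q%:R - z) * Ap + (z - p%:R) * Aq = 0.
      rewrite /Ap /Aq; nra.
    have t1 : 0 <= (q%:R - z) * Ap by apply: mulr_ge0 => //; lra.
    have t2 : 0 <= (z - p%:R) * Aq by apply: mulr_ge0 => //; lra.
    have t3 : (z - p%:R) * Aq = 0 by lra.
    move/eqP: t3; rewrite mulf_eq0 subr_eq0 eq_sym (negbTE np) /= subr_eq0 => /eqP //.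
  exists q; split; last by rewrite vq eqq.
  by rewrite -(ltr_nat R); apply: lt_trans zq'; rewrite ltr_nat.
have A0 : Aapp != 0 by rewrite -size_poly_gt0 HBs.
have [muA [tA pA]] := profile_ex Hv lam A0.
have muAe : muA = mus.
  case: (pA) => p1 p2 _.
  have h1 := p1 k0; rewrite /geR ek0 /= in h1.
  have h2 := lowB tA; rewrite /geR p2 /= in h2.
  lra.
have stA : (s < tA)%N.
  case: (ltnP tA k0) => [lt|le]; last by apply: leq_trans s0k le.
  case: pA => _ _ p3; have := p3 k0 lt; rewrite /gtR ek0 /= muAe ltxx.
  by [].
set Bapp := Papp %/ Aapp.
set C := B - Bapp.
have hB : Papp = Bapp * Aapp by apply/eqP; rewrite -dvdp_eq.
have h1 := PBA; rewrite -/B in h1.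
have key : dP = E * B + Aapp * C.
  have : E * B + Aapp * C = B * A - Bapp * Aapp by rewrite /E /C; ring.
  by rewrite -h1 -hB => ->; ring.
have otr (a : R) (u : option R) (w : option int) : ole (Some a) u -> ole u (ointR R w) -> geR a w.
  rewrite /geR; case: u => [b|] //=; case: (ointR R w) => //= c; apply: le_trans.
have dPb k : gtR (muEB + lam * k%:R) (val dP`_k).
  case: (leqP n k) => kn; first by rewrite dP_hi // (gtR0 Hv).
  have hk : 0 <= (k%:R : R) <= n.-1%:R := rng kn.
  have hdp := HdPv (i := k); rewrite lt_n1 in hdp; have {hdp} hdp := hdp kn.
  case: (leqP k d) => kd.
    case Fk: (fapp k%:R) => [z|]; last first.
      by have [_ ->] := fapp_none (ltnW kn) Fk; rewrite (gtR0 Hv).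
    have hd := Hdel (x := k%:R) (b := z) hk; rewrite phik // Fk in hd.
    have g1 := otr _ _ _ (hd erefl) hdp.
    apply: (geR_lt _ g1).
    have := supS k z (ltnW kn) Fk; rewrite /muEB /muE; lra.
  have ephi : phi_ext fapp d k%:R = Some ((Fd - y0) * (k%:R - d%:R) + Fd).
    by rewrite /phi_ext ler_nat leqNgt kd /= Fdd F0.
  have hd := Hdel hk ephi.
  have g1 := otr _ _ _ hd hdp.
  apply: (geR_lt _ g1).
  have h2 := supS d Fd (ltnW Hdn) Fdd.
  have kd' : (d%:R : R) < k%:R by rewrite ltr_nat.
  have : lam * (k%:R - d%:R) <= lam0 * (k%:R - d%:R).
    by apply: ler_wpM2r => //; rewrite subr_ge0 ltW.
  rewrite /muEB /muE /lam0; lra.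
have dPs k : dP`_k = (E * B)`_k + (Aapp * C)`_k by rewrite {1}key coefD.
case: (eqVneq C 0) => [C0|C0].
  have := dPb s; rewrite dPs C0 mulr0 coef0 addr0.
  by case: pEB => _ h2 _; apply: no_eq h2.
have [muC [tC pC]] := profile_ex Hv lam C0.
have pAC := profile_mul Hv pA pC.
set t' := (tA + tC)%N in pAC.
set mu' := muA + muC in pAC.
have st' : (s < t')%N by apply: leq_trans stA (leq_addr _ _).
case: pEB => EB1 EB2 EB3; case: pAC => AC1 AC2 AC3.
case: (ltgtP mu' muEB) => [lt|gt|eq].
- have hs : gtR (mu' + lam * t'%:R) (val (E * B)`_t').
    by apply: (geR_lt _ (EB1 t')); lra.
  have := val_strict Hv AC2 hs; rewrite addrC -dPs => e.
  have le' : mu' + lam * t'%:R <= muEB + lam * t'%:R by lra.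
  by apply: no_eq e (gtR_le le' (dPb t')).
- have hs : gtR (muEB + lam * s%:R) (val (Aapp * C)`_s).
    by apply: (geR_lt _ (AC1 s)); lra.
  have := val_strict Hv EB2 hs; rewrite -dPs => e.
  by apply: no_eq e (dPb s).
- have hs := EB3 t' st'.
  rewrite eq in AC2.
  have := val_strict Hv AC2 hs; rewrite addrC -dPs => e.
  by apply: no_eq e (dPb t').
Qed.

End Main.


Unset Implicit Arguments. Set Strict Implicit.

Theorem proposition4p6
  (K : fieldType) (val : K -> option int) (R : realFieldType)
  (n d : nat) (Papp dP A Aapp : {poly K})
  (fapp phiP : R -> option R) (delta : R) :
  is_cdvf val ->
  Papp \is monic -> size Papp = n.+1 ->
  (0 < d)%N -> (d < n)%N ->
  is_NF val Papp fapp ->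
  (exists v : int, val Papp`_d = Some v /\ extremal n%:R fapp (d%:R, v%:~R)) ->
  (exists j : nat, (j < d)%N /\ Papp`_j != 0) ->
  (* phiP is a Newton function of degree n-1, nondegenerate for Papp *)
  newton_function n.-1 phiP ->
  (forall x, 0 <= x <= n.-1%:R -> ole (fapp x) (phiP x)) ->
  (forall p, extremal n%:R fapp p -> p.1 <= n.-1%:R -> olt (Some p.2) (phiP p.1)) ->
  (* delta = min_{x in [0,n-1]} (phiP x - phi x) (as an infimum) *)
  (forall x b, 0 <= x <= n.-1%:R -> phi_ext fapp d x = Some b ->
     ole (Some (b + delta)) (phiP x)) ->
  (forall eps : R, 0 < eps -> exists x, 0 <= x <= n.-1%:R /\
     exists a b, phiP x = Some a /\ phi_ext fapp d x = Some b /\ a - b < delta + eps) ->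
  0 < delta ->
  (* the perturbation *)
  (size dP <= n)%N ->
  (forall i : nat, (i <= n.-1)%N -> ole (phiP i%:R) (@ointR R (val dP`_i))) ->
  (* A and Aapp: the monic degree-d divisors with the prescribed Newton function *)
  A \is monic -> size A = d.+1 -> A %| Papp + dP ->
  (forall fA : R -> option R, is_NF val A fA ->
     forall x, 0 <= x <= d%:R -> fA x = osub (fapp x) (odflt 0 (fapp d%:R))) ->
  Aapp \is monic -> size Aapp = d.+1 -> Aapp %| Papp ->
  (forall fA : R -> option R, is_NF val Aapp fA ->
     forall x, 0 <= x <= d%:R -> fA x = osub (fapp x) (odflt 0 (fapp d%:R))) ->
  (forall fP : R -> option R, is_NF val (Papp + dP) fP ->
     forall x, 0 <= x <= n%:R -> fP x = fapp x)
  /\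
  (forall i : nat, (i < d)%N ->
     ole (osub (phi_ext fapp d i%:R) (odflt 0 (phi_ext fapp d d%:R) - delta))
         (@ointR R (val (A - Aapp)`_i))).
Proof.
move=> Hv Hmon Hsz Hd0 Hdn HNF Hext Hj Hnewt Hge Hnd Hdel Hinf Hdpos HdPsz HdPv
  HAm HAs HAd HAN HBm HBs HBd HBN.
split.
- by move=> fP HP x hx; exact: (part1 Hv Hsz Hdn HNF Hge Hnd HdPsz HdPv HP hx).
- by move=> i hi; exact: (part2 Hv Hmon Hsz Hd0 Hdn HNF Hext Hge Hnd Hdel Hdpos HdPsz HdPv HAm HAs HAd HAN HBm HBs HBd HBN hi).
Qed.
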